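(* Let $N$ be a natural number. For any $\delta\subseteq{}^{\underline N}2$ and $Z\subseteq N$, \[\mathrm{HN}\big(L(\delta,Z)\cup R(\delta,Z)\big)=\min\{\mathrm{HN}(L(\delta,Z)),\mathrm{HN}(R(\delta,Z))\}.\]
   Context: $N=\{0,\ldots,N-1\}$; ${}^{\underline N}2$ is the set of all partial functions $\sigma$ with $\mathrm{dom}(\sigma)\subseteq N$ and values in $\{0,1\}$ (the empty function included); $|\sigma|$ is the size of $\sigma$ (equivalently of its domain). For $\sigma\in{}^{\underline N}2$ and $Z\subseteq N$, $\sigma\restriction Z=\{(a,b)\in\sigma: a\in Z\}$. $L(\delta,Z)=\{\sigma\restriction Z:\sigma\in\delta,\ |\sigma\restriction Z|\geq|\sigma\restriction(N\setminus Z)|\}$ and $R(\delta,Z)=\{\sigma\restriction(N\setminus Z):\sigma\in\delta,\ |\sigma\restriction Z|<|\sigma\restriction(N\setminus Z)|\}$. For $\delta_1,\delta_2\subseteq{}^{\underline N}2$, $\delta_1\preceq\delta_2$ means that for every $\sigma\in\delta_1$ there is $\rho\in\delta_2$ with $\rho\subseteq\sigma$. For $\delta\subseteq{}^{\underline N}2$, $\mathrm{hn}(\delta)$ is the maximum of $k+1$ over those $k\in\{0,\ldots,N-1\}$ such that for every $\delta'\subseteq\delta$ there is $\delta''\subseteq\delta'$ whose elements have pairwise disjoint domains and $|\bigcup_{\sigma\in\delta''}\mathrm{dom}(\sigma)|\geq k|\delta'|$; and $\mathrm{HN}(\delta)=\max\{\mathrm{hn}(\delta'):\delta'\subseteq{}^{\underline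 N}2,\ \delta\preceq\delta'\}$. *)

(* Defs.v *)
From mathcomp Require Import all_boot all_order.
Set Implicit Arguments. Unset Strict Implicit. Unset Printing Implicit Defensive.

(* A partial function N -> 2 (N = {0,...,N-1}) is a finite function
   'I_N -> option bool; None means "undefined". *)
Definition pfun (N : nat) := {ffun 'I_N -> option bool}.

Section Defs.
Variable N : nat.

Definition dom (s : pfun N) : {set 'I_N} := [set i | s i != None].

Definition psize (s : pfun N) : nat := #|dom s|.

Definition restr (s : pfun N) (Z : {set 'I_N}) : pfun N :=
  [ffun i => if i \in Z then s i else None].

Definition psub (r s : pfun N) : bool :=
  [forall i, (r i != None) ==> (r i == s i)].

Definition Lset (d : {set pfun N}) (Z : {set 'I_N}) : {set pfun N} :=
  [set restr s Z | s in d & psize (restr s (~: Z)) <= psize (restr s Z)].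

Definition Rset (d : {set pfun N}) (Z : {set 'I_N}) : {set pfun N} :=
  [set restr s (~: Z) | s in d & psize (restr s Z) < psize (restr s (~: Z))].

Definition preceq (d1 d2 : {set pfun N}) : bool :=
  [forall s in d1, exists r in d2, psub r s].

Definition pw_disjoint (d : {set pfun N}) : bool :=
  [forall s in d, forall r in d, (s != r) ==> [disjoint dom s & dom r]].

Definition hn_prop (d : {set pfun N}) (k : nat) : bool :=
  [forall d1 : {set pfun N}, (d1 \subset d) ==>
     [exists d2 : {set pfun N}, [&& d2 \subset d1, pw_disjoint d2 &
        k * #|d1| <= #|\bigcup_(s in d2) dom s| ]]].

(* hn(delta) = max{k+1 : k in {0..N-1}, hn_prop k}; (0 if no such k, i.e. N = 0) *)
Definition hn (d : {set pfun N}) : nat :=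
  \max_(k < N | hn_prop d k) k.+1.

Definition HN (d : {set pfun N}) : nat :=
  \max_(d' : {set pfun N} | preceq d d') hn d'.

End Defs.

(* Main.v *)
Require Import Defs.
From mathcomp Require Import all_boot all_order.
Set Implicit Arguments. Unset Strict Implicit.

Section Aux.
Variable N : nat.
Implicit Types (d A B : {set pfun N}) (Z : {set 'I_N}).

Lemma hn_propW d k m : m <= k -> hn_prop d k -> hn_prop d m.
Proof.
move=> mk /forallP H; apply/forallP => d1; apply/implyP => s1.
have /existsP[d2 /and3P[a b c]] := implyP (H d1) s1.
apply/existsP; exists d2; rewrite a b /=.
exact: leq_trans (leq_mul mk (leqnn _)) c.
Qed.

Lemma hn_propS A B k : A \subset B -> hn_prop B k -> hn_prop A k.
Proof.
move=> AB /forallP H; apply/forallP => d1; apply/implyP => s1.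
exact: (implyP (H d1) (subset_trans s1 AB)).
Qed.

Lemma hn_leN d : hn d <= N.
Proof. by apply/bigmax_leqP => k _; exact: ltn_ord. Qed.

Lemma hn_gt d m : m < hn d -> hn_prop d m.
Proof.
move=> H; case nH: (hn_prop d m) => //; exfalso.
have : hn d <= m.
  apply/bigmax_leqP => k Hk; rewrite leqNgt; apply/negP => mk.
  by rewrite ltnS in mk; rewrite (hn_propW mk Hk) in nH.
by rewrite leqNgt H.
Qed.

Lemma hn_ge d m (Hm : m < N) : hn_prop d m -> m < hn d.
Proof. move=> H; exact: (@leq_bigmax_cond _ _ (fun k : 'I_N => k.+1) (Ordinal Hm) H). Qed.

Lemma hn_anti A B : A \subset B -> hn B <= hn A.
Proof.
move=> AB; apply/bigmax_leqP => k Hk.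
apply: (hn_ge (ltn_ord k)); exact: hn_propS AB Hk.
Qed.

Lemma psub_dom (r s : pfun N) : psub r s -> dom r \subset dom s.
Proof.
move=> /forallP H; apply/subsetP => i; rewrite !inE => ri.
by have /eqP <- := implyP (H i) ri.
Qed.

Lemma dom_restr (s : pfun N) Z : dom (restr s Z) \subset Z.
Proof.
apply/subsetP => i; rewrite !inE ffunE; by case: (i \in Z); rewrite ?eqxx.
Qed.

Lemma hn_propU A B Z k :
  {in A, forall s, dom s \subset Z} -> {in B, forall s, dom s \subset ~: Z} ->
  hn_prop A k -> hn_prop B k -> hn_prop (A :|: B) k.
Proof.
move=> HA HB /forallP PA /forallP PB; apply/forallP => d1; apply/implyP => s1.
have /existsP[d2L /and3P[aL bL cL]] := implyP (PA (d1 :&: A)) (subsetIr _ _).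
have /existsP[d2R /and3P[aR bR cR]] := implyP (PB (d1 :&: B)) (subsetIr _ _).
have dL : forall s, s \in d2L -> dom s \subset Z.
  by move=> s /(subsetP aL); rewrite inE => /andP[_ /HA].
have dR : forall s, s \in d2R -> dom s \subset ~: Z.
  by move=> s /(subsetP aR); rewrite inE => /andP[_ /HB].
apply/existsP; exists (d2L :|: d2R); apply/and3P; split.
- apply/subsetP => s; rewrite inE => /orP[/(subsetP aL)|/(subsetP aR)];
  by rewrite inE => /andP[].
- apply/forallP => s; apply/implyP => hs; apply/forallP => r; apply/implyP => hr.
  apply/implyP => sr.
  have disZ : forall x y, x \in d2L -> y \in d2R -> [disjoint dom x & dom y].
    move=> x y hx hy; apply: (disjointW (dL x hx) (dR y hy)).
    by rewrite disjoint_subset; apply/subsetP => i iZ; rewrite !inE iZ.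
  move: hs hr; rewrite !inE => /orP[hs|hs] /orP[hr|hr].
  + by have /forallP/(_ s) /implyP/(_ hs)/forallP/(_ r)/implyP/(_ hr)/implyP := bL; apply.
  + exact: disZ.
  + by rewrite disjoint_sym; apply: disZ.
  + by have /forallP/(_ s) /implyP/(_ hs)/forallP/(_ r)/implyP/(_ hr)/implyP := bR; apply.
- rewrite bigcup_setU.
  have dUU : [disjoint \bigcup_(s in d2L) dom s & \bigcup_(s in d2R) dom s].
    apply: (@disjointW _ _ Z _ (~: Z)).
    - by apply/bigcupsP => s /dL.
    - by apply/bigcupsP => s /dR.
    - by rewrite disjoint_subset; apply/subsetP => i iZ; rewrite !inE iZ.
  rewrite cardsU (disjoint_setI0 dUU) cards0 subn0.
  have d1E : d1 = (d1 :&: A) :|: (d1 :&: B) by rewrite -setIUr; apply/esym/setIidPl.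
  apply: leq_trans (leq_add cL cR).
  rewrite -mulnDr leq_mul2l; apply/orP; right.
  by rewrite {1}d1E cardsU leq_subr.
Qed.

Lemma preceqT d : preceq d setT.
Proof.
apply/forallP => s; apply/implyP => _; apply/existsP; exists s; rewrite inE /=.
by apply/forallP => i; apply/implyP.
Qed.

Lemma HN_anti A B : A \subset B -> HN B <= HN A.
Proof.
move=> AB; apply/bigmax_leqP => d' Hd'.
apply: (@leq_bigmax_cond _ (fun x => preceq A x) (@hn N)).
apply/forallP => s; apply/implyP => hs.
exact: (implyP (forallP Hd' s) (subsetP AB s hs)).
Qed.

Lemma HN_attained A : {d' | preceq A d' & HN A = hn d'}.
Proof.
have := @eq_bigmax_cond _ (fun x => preceq A x) (@hn N).
case=> [|d' H1 H2]; last by exists d'.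
apply/card_gt0P; exists setT; exact: preceqT.
Qed.

Lemma preceq_filter A d Z :
  {in A, forall s, dom s \subset Z} -> preceq A d ->
  preceq A [set r in d | dom r \subset Z].
Proof.
move=> HA /forallP H; apply/forallP => s; apply/implyP => hs.
have /existsP[r /andP[hr prs]] := implyP (H s) hs.
apply/existsP; exists r; rewrite prs inE hr /= andbT.
exact: subset_trans (psub_dom prs) (HA s hs).
Qed.

End Aux.

Theorem theorem6p27 (N : nat) (d : {set pfun N}) (Z : {set 'I_N}) :
  HN (Lset d Z :|: Rset d Z) = minn (HN (Lset d Z)) (HN (Rset d Z)).
Proof.
apply/eqP; rewrite eqn_leq leq_min !HN_anti ?subsetUl ?subsetUr //=.
set L := Lset d Z; set R := Rset d Z.
have HL : {in L, forall s, dom s \subset Z}.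
  by move=> s /imsetP[t _ ->]; apply: dom_restr.
have HR : {in R, forall s, dom s \subset ~: Z}.
  by move=> s /imsetP[t _ ->]; apply: dom_restr.
have [dL pL ->] := HN_attained L.
have [dR pR ->] := HN_attained R.
set AL := [set r in dL | dom r \subset Z].
set AR := [set r in dR | dom r \subset ~: Z].
have pAL := preceq_filter HL pL.
have pAR := preceq_filter HR pR.
have hL : hn dL <= hn AL by apply: hn_anti; apply/subsetP => r; rewrite inE => /andP[].
have hR : hn dR <= hn AR by apply: hn_anti; apply/subsetP => r; rewrite inE => /andP[].
have pU : preceq (L :|: R) (AL :|: AR).
  apply/forallP => s; apply/implyP; rewrite inE => /orP[hs|hs].
  + have /existsP[r /andP[hr ?]] := implyP (forallP pAL s) hs.
    by apply/existsP; exists r; rewrite inE hr.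
  + have /existsP[r /andP[hr ?]] := implyP (forallP pAR s) hs.
    by apply/existsP; exists r; rewrite inE hr orbT.
apply: leq_trans (@leq_bigmax_cond _ (fun x => preceq (L :|: R) x) (@hn N) _ pU).
case Em: (minn (hn dL) (hn dR)) => [|m] //.
have mL : m < hn AL by apply: leq_trans hL; rewrite -Em geq_minl.
have mR : m < hn AR by apply: leq_trans hR; rewrite -Em geq_minr.
have mN : m < N by exact: leq_trans mL (hn_leN _).
apply: (hn_ge mN).
apply: (hn_propU (Z := Z)).
- by move=> s; rewrite inE => /andP[].
- by move=> s; rewrite inE => /andP[].
- exact: hn_gt.
- exact: hn_gt.
Qed.
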